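(* Let $p$ be a prime and let $s,g\geq1$ be integers with $s\mid g$. Then $$s\,r\!\left(\tfrac{2g}{s},p\right)+v_p(s!)\leq r(2g,p).$$
   Context: For a prime $p$ and an integer $n\geq1$, $r(n,p)=\sum_{i\geq0}\lfloor n/(p^i(p-1))\rfloor$. *)

(* Defs.v *)
From mathcomp Require Import all_boot.
Set Implicit Arguments.
Unset Strict Implicit.
Unset Printing Implicit Defensive.

(* r(n,p) = sum_{i>=0} floor(n / (p^i (p-1))).  For a prime p (p >= 2) and
   any n, every term with i >= n vanishes since p^i (p-1) >= 2^i > i, so the
   infinite sum equals the finite sum over 0 <= i <= n. *)
Definition r (n p : nat) : nat := \sum_(0 <= i < n.+1) n %/ (p ^ i * (p - 1)).

(* Main.v *)
Require Import Defs.
From mathcomp Require Import all_boot.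
From Stdlib Require Import Lia.
From mathcomp Require Import zify.

Lemma key_j (p n : nat) : prime p -> 0 < n ->
  exists j, [/\ n < p ^ j * (p - 1), p ^ j * (p - 1) <= p * n & j <= n].
Proof.
move=> pp n0; have p1 := prime_gt1 pp.
have Pn : n < p ^ n * (p - 1).
  have := ltn_expl n p1; have : 0 < p - 1 by lia.
  move=> h1 h2; apply: (leq_trans h2); exact: leq_pmulr h1.
have exP : exists j, n < p ^ j * (p - 1) by exists n.
case: (ex_minnP exP) => j Hj Hmin; exists j; split; [done| |exact: Hmin].
case: j Hj Hmin => [|j] Hj Hmin.
  rewrite expn0 mul1n; nia.
have : ~~ (n < p ^ j * (p - 1)).
  by apply/negP => /Hmin; rewrite ltnn.
rewrite -leqNgt expnS => h; rewrite -mulnA leq_mul2l h orbT //.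
Qed.

Lemma general (p s n : nat) : prime p -> 0 < s -> 0 < n ->
  s * r n p + logn p (s `!) <= r (s * n) p.
Proof.
move=> pp s0 n0; have p1 := prime_gt1 pp.
set d := fun i => p ^ i * (p - 1).
have d0 : forall i, 0 < d i by move=> i; rewrite /d muln_gt0 expn_gt0; apply/andP; split; lia.
have eq1 : r (s * n) p = \sum_(0 <= i < (s * n).+1) (s * (n %/ d i))
                         + \sum_(0 <= i < (s * n).+1) ((s * (n %% d i)) %/ d i).
  rewrite /r -big_split /=; apply: eq_bigr => i _.
  rewrite -/(d i) {1}(divn_eq n (d i)) mulnDr mulnA divnMDl //.
rewrite eq1; apply: leq_add.
  rewrite /r big_distrr /=.
  rewrite (@big_cat_nat _ _ _ n.+1 0 (s * n).+1) //=; last by rewrite ltnS; nia.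
  exact: leq_addr.
have [j [Hj1 Hj2 Hj3]] := key_j p n pp n0.
rewrite logn_fact // big_add1 /=.
have -> : \sum_(0 <= i < (s * n).+1) (s * (n %% d i)) %/ d i =
  \sum_(0 <= i < j) (s * (n %% d i)) %/ d i +
  \sum_(0 + j <= i < s + j) (s * (n %% d i)) %/ d i +
  \sum_(s + j <= i < (s * n).+1) (s * (n %% d i)) %/ d i.
  rewrite add0n -!big_cat_nat //; try nia.
rewrite big_addn addnK -addnA addnC -addnA; apply: leq_trans (leq_addr _ _).
apply: leq_sum => k _.
have dk : d (k + j) = p ^ k * d j by rewrite /d expnD mulnA.
rewrite modn_small; last first.
  rewrite dk; apply: (leq_trans Hj1); rewrite /d leq_pmull // expn_gt0; lia.
have : d (k + j) <= p ^ k.+1 * n by rewrite dk expnSr -mulnA leq_mul2l Hj2 orbT.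
move=> h.
rewrite -(@divnMr n s (p ^ k.+1) n0) mulnC.
exact: leq_div2l.
Qed.

Theorem mainTheorem19 (p s g : nat) :
  prime p -> 0 < s -> 0 < g -> s %| g ->
  s * r ((2 * g) %/ s) p + logn p (s `!) <= r (2 * g) p.
Proof.
move=> pp s0 g0 /dvdnP [q Hq].
have q0 : 0 < q by move: g0; rewrite Hq muln_gt0 => /andP[].
have -> : 2 * g = s * (2 * q) by rewrite Hq; lia.
rewrite mulKn //; apply: general => //; lia.
Qed.
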